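(* Let $\Lambda\subset\mathbb{R}^2$ be a lattice invariant under $\mathrm{diag}(e^a,e^{-a})$ for some $a\neq0$ (so that $\Gamma=\Lambda\rtimes a\mathbb{Z}$ is a lattice in $\mathsf{Solv}$), and let $\Lambda'=\{\underline{\mu}\in\mathbb{R}^2:\underline{\mu}\cdot m\in2\pi\mathbb{Z}\ \forall m\in\Lambda\}$ be its dual lattice. For $\underline{\mu}=(\mu,\mu')\in\Lambda'\setminus\{0\}$ consider the operator $\Delta_{\underline{\mu}}f=-f_{zz}+(\mu^2e^{-2z}+(\mu')^2e^{2z})f$ on $L^2(\mathbb{R})$. Then the first eigenvalue of $\Delta_{\underline{\mu}}$ is at least $2|\mu\mu'|$, and $2|\mu\mu'|\neq0$.
   Context: $\mathsf{Solv}$ is $\mathbb{R}^2\rtimes\mathbb{R}$ with $z\in\mathbb{R}$ acting on $\mathbb{R}^2$ by $\mathrm{diag}(e^z,e^{-z})$, with left-invariant metric $e^{2z}dx^2+e^{-2z}dy^2+dz^2$. The operators $\Delta_{\underline{\mu}}$ are the Fourier components of the Laplacian on functions on $\Gamma\backslash\mathsf{Solv}$ with respect to the $\mathbb{R}^2$-directions. *)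

(* Defs.v *)
From HB Require Import structures.
From mathcomp Require Import all_boot all_order all_algebra.
From mathcomp Require Import all_classical all_reals all_analysis.
Set Implicit Arguments. Unset Strict Implicit. Unset Printing Implicit Defensive.
Import Order.TTheory GRing.Theory Num.Theory.
Import numFieldNormedType.Exports.
Local Open Scope classical_set_scope.
Local Open Scope ring_scope.

Section SolvDefs.
Variable R : realType.

Definition lattice2 (L : set (R * R)) : Prop :=
  exists v w : R * R, v.1 * w.2 - v.2 * w.1 != 0 /\
    L = [set m | exists k l : int,
           m = (k%:~R * v.1 + l%:~R * w.1, k%:~R * v.2 + l%:~R * w.2)].

Definition solv_act (z : R) (m : R * R) : R * R :=
  (expR z * m.1, expR (- z) * m.2).

Definition dual_lattice (L : set (R * R)) : set (R * R) :=
  [set mu | forall m, L m -> exists k : int, mu.1 * m.1 + mu.2 * m.2 = 2 * pi * k%:~R].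

Definition Delta_mu (mu : R * R) (f : R -> R) (z : R) : R :=
  - derive1 (derive1 f) z + (mu.1 ^+ 2 * expR (- 2 * z) + mu.2 ^+ 2 * expR (2 * z)) * f z.

Definition is_eigenvalue (mu : R * R) (lam : R) : Prop :=
  exists f : R -> R,
    (forall z, derivable f z 1 /\ derivable (derive1 f) z 1) /\
    (@lebesgue_measure R).-integrable setT (fun z => ((f z) ^+ 2)%:E) /\
    f <> (fun _ => 0) /\
    (forall z, Delta_mu mu f z = lam * f z).

End SolvDefs.

(* Main.v *)
Require Import Defs.
From HB Require Import structures.
From mathcomp Require Import all_boot all_order all_algebra.
From mathcomp Require Import all_classical all_reals all_analysis.
From mathcomp Require Import lra ring.
Import Order.TTheory GRing.Theory Num.Theory.
Import numFieldNormedType.Exports.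
Local Open Scope classical_set_scope.
Local Open Scope ring_scope.


Lemma der_cont {R : realType} (f : R -> R) : (forall z, derivable f z 1) -> continuous f.
Proof.
move=> df z; exact/differentiable_continuous/derivable1_diffP.
Qed.

Lemma core_ode {R : realType} (f V : R -> R) (lam : R) :
  (forall z, derivable f z 1 /\ derivable (derive1 f) z 1) ->
  (forall z, lam <= V z) ->
  (forall z, - derive1 (derive1 f) z + V z * f z = lam * f z) ->
  forall z0, f z0 != 0 ->
  (forall z, z0 <= z -> f z0 ^+ 2 <= f z ^+ 2) \/
  (forall z, z <= z0 -> f z0 ^+ 2 <= f z ^+ 2).
Proof.
move=> df Vl eq z0 fz0.
set h := fun z => f z * derive1 f z.
set g := fun z => f z * f z.
have dh : forall z, derivable h z 1.
  by move=> z; apply: derivableM; case: (df z).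
have dg : forall z, derivable g z 1.
  by move=> z; apply: derivableM; case: (df z).
have h'E : forall z, derive1 h z = derive1 f z * derive1 f z + f z * derive1 (derive1 f) z.
  move=> z; rewrite derive1E deriveM; try by case: (df z).
  by rewrite -!derive1E /GRing.scale /= mulrC addrC.
have g'E : forall z, derive1 g z = 2 * h z.
  move=> z; rewrite derive1E deriveM; try by case: (df z).
  by rewrite -!derive1E /GRing.scale /= /h mulrC mulr2n mulrDl mul1r -mulr2n mulr2n mulrC [X in _ + X]mulrC.
have h'ge0 : forall z, 0 <= derive1 h z.
  move=> z; rewrite h'E.
  have -> : derive1 (derive1 f) z = (V z - lam) * f z.
    by have := eq z; rewrite mulrBl => e; lra.
  rewrite mulrA [f z * _]mulrC -mulrA.
  apply: addr_ge0; first by rewrite -expr2 sqr_ge0.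
  apply: mulr_ge0; [by rewrite subr_ge0 | by rewrite -expr2 sqr_ge0].
have hmono : forall x y, x <= y -> h x <= h y.
  move=> x y xy; apply: (@ger0_derive1_ndecr _ h x y) => //.
  apply: continuous_subspaceT; exact: der_cont.
have gcont : continuous g by exact: der_cont.
have gE : forall z, f z ^+ 2 = g z by move=> z; rewrite expr2.
case: (leP 0 (h z0)) => hz0; [left|right] => z zz.
- rewrite !gE; apply: (@ger0_derive1_ndecr _ g z0 z) => //.
  + move=> t; rewrite in_itv /= => /andP[t1 t2]; rewrite g'E.
    apply: mulr_ge0 => //; apply: (le_trans hz0); apply: hmono; exact: ltW.
  + exact: continuous_subspaceT.
- rewrite !gE; apply: (@ler0_derive1_nincr _ g z z0) => //.
  + move=> t; rewrite in_itv /= => /andP[t1 t2]; rewrite g'E.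
    rewrite pmulr_rle0 //; apply: (le_trans _ (ltW hz0)); apply: hmono; exact: ltW.
  + exact: continuous_subspaceT.
Qed.

Lemma not_int {R : realType} (g : R -> R) (c : R) (I : set R) : measurable I ->
  (@lebesgue_measure R) I = +oo%E -> 0 < c -> (forall z, I z -> c <= g z) ->
  ~ (@lebesgue_measure R).-integrable setT (fun z => (g z)%:E).
Proof.
move=> mI mu0 c0 cg gint.
have mag := measurable_int _ (integrable_abse gint).
have /integrableP[_ fin] := gint.
have h1 : (\int[@lebesgue_measure R]_(x in I) (cst c%:E) x <=
           \int[@lebesgue_measure R]_(x in I) (abse \o (fun z => (g z)%:E)) x)%E.
  apply: ge0_le_integral => //.
  - by move=> x _; rewrite lee_fin ltW.
  - exact: measurable_funS mag.
  - by move=> x Ix /=; rewrite lee_fin (le_trans (cg x Ix)) // ler_norm.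
have h2 : (\int[@lebesgue_measure R]_(x in I) (abse \o (fun z => (g z)%:E)) x <=
           \int[@lebesgue_measure R]_(x in setT) (abse \o (fun z => (g z)%:E)) x)%E.
  apply: ge0_subset_integral => // x _; exact: abse_ge0.
have e : (c%:E * lebesgue_measure I = +oo)%E by rewrite mu0 gt0_muley ?lte_fin.
move: h1; rewrite integral_cst // e => h1.
have := le_lt_trans (le_trans h1 h2) fin.
by rewrite ltxx.
Qed.

Lemma small {R : realType} (c a0 : R) : c != 0 -> 0 < a0 ->
  ~ (forall n : nat, exists k : int, c * expR (- (n%:R * a0)) = 2 * pi * k%:~R).
Proof.
move=> c0 a00 H.
have pi0 : 0 < pi by exact: pi_gt0.
set x := `|c| / (2 * pi * a0).
have [k hk] := H (Num.truncn x).+1.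
set n := (Num.truncn x).+1 in hk.
have xn : x < n%:R by exact: truncnS_gt.
set t := n%:R * a0 in hk.
have et : 0 < expR (- t) by exact: expR_gt0.
have lhs0 : c * expR (- t) != 0 by rewrite mulf_neq0 // gt_eqF.
have k0 : k != 0 by apply: contra_neq lhs0 => kk; rewrite hk kk mulr0.
have k1 : 1 <= `|k%:~R : R|.
  by rewrite -intr_norm ler1z -gtz0_ge1 normr_gt0.
have : `|c * expR (- t)| < 2 * pi.
  rewrite normrM (gtr0_norm et) expRN.
  rewrite ltr_pdivrMr ?expR_gt0 //.
  apply: (lt_le_trans (y := 2 * pi * (1 + t))).
    have P0 : 0 < 2 * pi * a0.
      by apply: mulr_gt0 => //; apply: mulr_gt0 => //; exact: pi_gt0.
    have : x * (2 * pi * a0) < n%:R * (2 * pi * a0) by rewrite ltr_pM2r.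
    rewrite /x divfK; last by rewrite gt_eqF.
    move=> h.
    rewrite /t; nra.
  rewrite ler_pM2l; [exact: expR_ge1Dx | apply: mulr_gt0 => //; exact: pi_gt0].
have p2 : 0 < 2 * (pi : R) by apply: mulr_gt0 => //; exact: pi_gt0.
rewrite hk normrM (gtr0_norm p2) => h.
have : 2 * (pi : R) * 1 <= 2 * pi * `|k%:~R : R| by rewrite ler_pM2l.
rewrite mulr1 => h2.
by have := lt_le_trans h h2; rewrite ltxx.
Qed.

Lemma act_comp {R : realType} (x y : R) (m : R * R) :
  solv_act x (solv_act y m) = solv_act (x + y) m.
Proof.
by rewrite /solv_act /= opprD !expRD !mulrA.
Qed.

Lemma act0 {R : realType} (m : R * R) : solv_act 0 m = m.
Proof. by case: m => m1 m2; rewrite /solv_act /= oppr0 expR0 !mul1r. Qed.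



Theorem lemma7 (R : realType) (L : set (R * R)) (a : R) :
  lattice2 L -> a != 0 -> solv_act a @` L = L ->
  forall mu : R * R, dual_lattice L mu -> mu != (0, 0) ->
    (forall lam : R, is_eigenvalue mu lam -> 2 * `|mu.1 * mu.2| <= lam) /\
    2 * `|mu.1 * mu.2| != 0.
Proof.
move=> [v [w [det LE]]] a0 inv mu dmu mu0.
split.
  move=> lam [f [df [fint [fnz feq]]]].
  rewrite leNgt; apply/negP => lt.
  have Vge : forall z, lam <= mu.1 ^+ 2 * expR (- 2 * z) + mu.2 ^+ 2 * expR (2 * z).
    move=> z; apply: (le_trans (ltW lt)).
    have pq : expR (- z) * expR z = 1 by rewrite -expRD addNr expR0.
    have -> : - 2 * z = - z + - z by ring.
    have -> : 2 * z = z + z by ring.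
    rewrite !expRD -(real_normK (num_real mu.1)) -(real_normK (num_real mu.2)) normrM.
    have := sqr_ge0 (`|mu.1| * expR (- z) - `|mu.2| * expR z).
    nra.
  have [z0 fz0] : exists z0, f z0 != 0.
    case: (pselect (exists z0, f z0 != 0)) => [//|H]; exfalso; apply: fnz.
    apply/funext => z; apply/eqP; apply/negPn/negP => hz; apply: H; exists z; exact: hz.
  have c0 : 0 < f z0 ^+ 2 by rewrite lt_neqAle sqr_ge0 andbT eq_sym sqrf_eq0.
  case: (@core_ode R f (fun z => mu.1 ^+ 2 * expR (- 2 * z) + mu.2 ^+ 2 * expR (2 * z)) lam df Vge feq z0 fz0) => H.
  - apply: (@not_int R (fun z => f z ^+ 2) (f z0 ^+ 2) [set` `[z0, +oo[%R] _ _ c0 _ fint).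
    + exact: measurable_itv.
    + by rewrite lebesgue_measure_itv /= ltry.
    + by move=> z /=; rewrite in_itv /= andbT; exact: H.
  - apply: (@not_int R (fun z => f z ^+ 2) (f z0 ^+ 2) [set` `]-oo, z0]%R] _ _ c0 _ fint).
    + exact: measurable_itv.
    + by rewrite lebesgue_measure_itv /= ltNyr.
    + by move=> z /=; rewrite in_itv /=; exact: H.
have fwd : forall m, L m -> L (solv_act a m) by move=> m Lm; rewrite -inv; exists m.
have bwd : forall m, L m -> L (solv_act (- a) m).
  by move=> m; rewrite -{1}inv => -[m' Lm' <-]; rewrite act_comp addNr act0.
have step : forall m, L m -> L (solv_act `|a| m) /\ L (solv_act (- `|a|) m).
  move=> m Lm; have [ag|al] := leP 0 a.
  - by rewrite ger0_norm //; split; [exact: fwd | exact: bwd].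
  - by rewrite ltr0_norm // opprK; split; [exact: bwd | exact: fwd].
have iter : forall n : nat, forall m, L m ->
    L (solv_act (n%:R * `|a|) m) /\ L (solv_act (- (n%:R * `|a|)) m).
  elim => [|n IH] m Lm; first by rewrite mul0r oppr0 act0.
  rewrite -addn1 natrD mulrDl mul1r; have [h1 h2] := IH m Lm; split.
  - by rewrite addrC -act_comp; exact: (step _ h1).1.
  - by rewrite opprD addrC -act_comp; exact: (step _ h2).2.
have apos : 0 < `|a| by rewrite normr_gt0.
have [mA [LmA mA2]] : exists m, L m /\ m.2 != 0.
  have [v2|v2] := eqVneq v.2 0.
  - exists w; split.
      rewrite LE; exists 0, 1; rewrite /= !(mulr0z, mulr1z, mul0r, mul1r, add0r).
      exact: surjective_pairing.
    by apply: contra_neq det => w20; rewrite v2 w20; ring.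
  - exists v; split => //.
    rewrite LE; exists 1, 0; rewrite /= !(mulr0z, mulr1z, mul0r, mul1r, addr0).
    exact: surjective_pairing.
have [mB [LmB mB1]] : exists m, L m /\ m.1 != 0.
  have [v1|v1] := eqVneq v.1 0.
  - exists w; split.
      rewrite LE; exists 0, 1; rewrite /= !(mulr0z, mulr1z, mul0r, mul1r, add0r).
      exact: surjective_pairing.
    by apply: contra_neq det => w10; rewrite v1 w10; ring.
  - exists v; split => //.
    rewrite LE; exists 1, 0; rewrite /= !(mulr0z, mulr1z, mul0r, mul1r, addr0).
    exact: surjective_pairing.
have mu1 : mu.1 != 0.
  apply/negP => /eqP m10.
  have m20 : mu.2 != 0.
    by move: mu0; case: mu m10 dmu => x y /= -> _; apply: contra_neq => ->.
  apply: (@small _ (mu.2 * mA.2) `|a|) => //; first by rewrite mulf_neq0.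
  move=> n; have [k hk] := dmu _ (iter n mA LmA).1.
  by exists k; rewrite -hk /solv_act /= m10; ring.
have mu2 : mu.2 != 0.
  apply/negP => /eqP m20.
  apply: (@small _ (mu.1 * mB.1) `|a|) => //; first by rewrite mulf_neq0.
  move=> n; have [k hk] := dmu _ (iter n mB LmB).2.
  by exists k; rewrite -hk /solv_act /= m20; ring.
by rewrite mulf_neq0 // normr_eq0 mulf_neq0.
Qed.
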